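(* Let $F$ be a positive integer, $S\in\mathrm{Sat}(F)$, and $x\in\mathrm{SG}(S)$ with $x<\mathrm{m}(S)$ and $x\neq F$. Then $S\cup\{x\}\in\mathrm{Sat}(F)$ if and only if $s+\mathrm{d}_{S\cup\{x\}}(s)\in S$ for every $s\in S$ with $\mathrm{m}(S)\le s\le \mathrm{m}(S)+x$.
   Context: A numerical semigroup is a subset $S\subseteq\mathbb{N}$ closed under addition, containing $0$, with $\mathbb{N}\setminus S$ finite. Its Frobenius number $\mathrm{F}(S)$ is the largest integer not in $S$, and its multiplicity $\mathrm{m}(S)$ is $\min(S\setminus\{0\})$. For $A\subseteq\mathbb{N}$ and $a\in A$, let $\mathrm{d}_A(a)=\gcd\{x\in A\mid x\le a\}$. A numerical semigroup $S$ is saturated if $s+\mathrm{d}_S(s)\in S$ for all $s\in S\setminus\{0\}$. For a positive integer $F$, $\mathrm{Sat}(F)$ denotes the set of all saturated numerical semigroups $S$ with $\mathrm{F}(S)=F$. An integer $z$ is a pseudo-Frobenius number of $S$ if $z\notin S$ and $z+s\in S$ for all $s\in S\setminus\{0\}$; $\mathrm{PF}(S)$ is the set of these, and $\mathrm{SG}(S)=\{x\in\mathrm{PF}(S)\mid 2x\in S\}$. *)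

(* Defs.v *)
From mathcomp Require Import all_boot.
Set Implicit Arguments. Unset Strict Implicit. Unset Printing Implicit Defensive.

Definition numerical_semigroup (S : pred nat) : Prop :=
  [/\ S 0, (forall a b, S a -> S b -> S (a + b)) & exists N, forall n, N <= n -> S n].

Definition is_frobenius (S : pred nat) (F : nat) : Prop :=
  ~~ S F /\ forall n, F < n -> S n.

Definition is_multiplicity (S : pred nat) (m : nat) : Prop :=
  [/\ 0 < m, S m & forall s, 0 < s -> S s -> m <= s].

Definition dA (A : pred nat) (a : nat) : nat :=
  \big[gcdn/0]_(0 <= y < a.+1 | A y) y.

Definition saturated (S : pred nat) : Prop :=
  forall s, S s -> 0 < s -> S (s + dA S s).

Definition inSat (F : nat) (S : pred nat) : Prop :=
  [/\ numerical_semigroup S, saturated S & is_frobenius S F].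

Definition pseudo_frobenius (S : pred nat) (z : nat) : Prop :=
  ~~ S z /\ forall s, S s -> 0 < s -> S (z + s).

Definition inSG (S : pred nat) (x : nat) : Prop :=
  pseudo_frobenius S x /\ S (2 * x).

Definition addelt (S : pred nat) (x : nat) : pred nat :=
  fun n => (n == x) || S n.

(* Main.v *)
Require Import Defs.
From mathcomp Require Import all_boot.

Lemma dA_dvd (A : pred nat) a y : A y -> y <= a -> dA A a %| y.
Proof.
move=> Ay ya; rewrite /dA big_mkcond /= /index_iota subn0.
rewrite (bigD1_seq y) ?iota_uniq ?mem_iota //=.
by rewrite Ay dvdn_gcdl.
Qed.

Lemma dA_gcd (A : pred nat) a k :
  (forall y, y <= a -> A y -> k %| y) -> k %| dA A a.
Proof.
move=> H; rewrite /dA big_seq_cond; apply: (big_ind (fun n => k %| n)) => //.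
- by move=> u v ku kv; rewrite dvdn_gcd ku kv.
- move=> i /andP [ia Ai]; apply: H => //.
  by move: ia; rewrite mem_index_iota ltnS; case/andP.
Qed.

Lemma dA_anti (A B : pred nat) a b : dA A a %| dA B b -> dA B b %| dA A a ->
  dA A a = dA B b.
Proof. by move=> h1 h2; apply/eqP; rewrite eqn_dvd h1 h2. Qed.

Theorem proposition19 (F : nat) (S : pred nat) (x m : nat) :
  0 < F -> inSat F S -> is_multiplicity S m ->
  inSG S x -> x < m -> x <> F ->
  (inSat F (addelt S x) <->
   (forall s, S s -> m <= s <= m + x -> S (s + dA (addelt S x) s))).
Proof.
move=> F0 [[S0 Sadd [N SN]] Ssat [SF SFn]] [m0 Sm mmin] [[Sx xS] S2x] xm xF.
have hx0 : 0 < x by case: x Sx {xS S2x xm xF} => // ; rewrite S0.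
split.
- move=> [_ Tsat _] s Ss /andP [ms _].
  have := Tsat s; rewrite /addelt Ss orbT => /(_ isT).
  case/(_ (leq_trans m0 ms))/orP => // /eqP e.
  by move: xm; rewrite -e ltnNge (leq_trans ms (leq_addr _ _)).
- move=> H.
  have Smx : S (m + x) by rewrite addnC; apply: xS.
  have dAx : dA (addelt S x) x = x.
    apply/eqP; rewrite eqn_dvd; apply/andP; split.
      by apply: dA_dvd => //; rewrite /addelt eqxx.
    apply: dA_gcd => y yx /orP [/eqP -> //|Sy].
    case: y yx Sy => [|y] yx Sy; first exact: dvdn0.
    by move: (mmin y.+1 isT Sy) => my; move: xm; rewrite ltnNge (leq_trans my yx).
  split; first split.
  + by rewrite /addelt S0 orbT.
  + move=> a b; rewrite /addelt => /orP [/eqP ->|Sa] /orP [/eqP ->|Sb].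
    * by rewrite addnn -mul2n S2x orbT.
    * case: b Sb => [|b] Sb; first by rewrite addn0 eqxx.
      by rewrite xS ?orbT.
    * case: a Sa => [|a] Sa; first by rewrite add0n eqxx.
      by rewrite addnC xS ?orbT.
    * by rewrite Sadd ?orbT.
  + by exists N => n /SN Sn; rewrite /addelt Sn orbT.
  + move=> t; rewrite /addelt => /orP [/eqP ->|St] t0.
      by rewrite dAx addnn -mul2n S2x orbT.
    have mt := mmin _ t0 St.
    case: (leqP t (m + x)) => tmx.
      by rewrite H ?mt ?orbT.
    suff -> : dA (addelt S x) t = dA S t by rewrite Ssat ?orbT.
    apply: dA_anti.
    * apply: dA_gcd => y yt Sy; apply: dA_dvd => //; by rewrite /addelt Sy orbT.
    * apply: dA_gcd => y yt /orP [/eqP ->|Sy]; last exact: dA_dvd.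
      have h1 : dA S t %| m by apply: dA_dvd => //; apply: leq_trans (ltnW tmx); apply: leq_addr.
      have h2 : dA S t %| m + x by apply: dA_dvd => //; apply: ltnW.
      by rewrite -(dvdn_addr x h1).
  + split; first by rewrite /addelt negb_or SF andbT; apply/eqP => e; apply: xF.
    by move=> n /SFn Sn; rewrite /addelt Sn orbT.
Qed.
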